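(* Let $\mathcal L_{\mathcal N}=(\mathcal L,[\cdot_\lambda\cdot]_{\mathcal L},\mathcal N)$ and $\mathcal H_{\mathcal Q}=(\mathcal H,[\cdot_\lambda\cdot]_{\mathcal H},\mathcal Q)$ be Nijenhuis Lie conformal algebras, let $(\chi_\lambda,\rho,\Phi)$ be a non-abelian $2$-cocycle of $\mathcal L_{\mathcal N}$ with values in $\mathcal H_{\mathcal Q}$ (arising from a non-abelian extension of $\mathcal L_{\mathcal N}$ by $\mathcal H_{\mathcal Q}$ and a section), and let $(\alpha,\beta)\in\mathrm{Aut}(\mathcal H_{\mathcal Q})\times\mathrm{Aut}(\mathcal L_{\mathcal N})$. Define $$\chi^{(\alpha,\beta)}_\lambda(p,q):=\alpha\big(\chi_\lambda(\beta^{-1}(p),\beta^{-1}(q))\big),\quad \rho^{(\alpha,\beta)}(p)_\lambda h:=\alpha\big(\rho(\beta^{-1}(p))_\lambda\alpha^{-1}(h)\big),\quad \Phi^{(\alpha,\beta)}(p):=\alpha\big(\Phi(\beta^{-1}(p))\big)$$ for $p,q\in\mathcal L$, $h\in\mathcal H$. Then $(\chi^{(\alpha,\beta)}_\lambda,\rho^{(\alpha,\beta)},\Phi^{(\alpha,\beta)})$ is a non-abelian $2$-cocycle of $\mathcal L_{\mathcal N}$ with values in $\mathcal H_{\mathcal Q}$.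
   Context: All spaces are over $\mathbb C$. A Lie conformal algebra is a $\mathbb C[\partial]$-module with a $\mathbb C$-bilinear $\lambda$-bracket satisfying $[\partial a_\lambda b]=-\lambda[a_\lambda b]$, $[a_\lambda\partial b]=(\partial+\lambda)[a_\lambda b]$, $[a_\lambda b]=-[b_{-\partial-\lambda}a]$, $[a_\lambda[b_\mu c]]=[[a_\lambda b]_{\lambda+\mu}c]+[b_\mu[a_\lambda c]]$. A Nijenhuis operator is a $\mathbb C[\partial]$-linear $\mathcal N$ with $[\mathcal N(p)_\lambda\mathcal N(q)]=\mathcal N([\mathcal N(p)_\lambda q]+[p_\lambda\mathcal N(q)]-\mathcal N([p_\lambda q]))$; a Nijenhuis Lie conformal algebra is a Lie conformal algebra with a Nijenhuis operator; $\mathrm{Aut}(\cdot)$ is the group of bijective bracket-preserving $\mathbb C[\partial]$-linear self-maps commuting with the Nijenhuis operator. A non-abelian $2$-cocycle of $\mathcal L_{\mathcal N}$ with values in $\mathcal H_{\mathcal Q}$ is a triple $\chi_\lambda:\mathcal L\otimes\mathcal L\to\mathcal H[\lambda]$, $\rho:\mathcal L\otimes\mathcal H\to\mathcal H[\lambda]$, $\Phi:\mathcal L\to\mathcal H$ satisfying for all $p,q,r\in\mathcal L$, $h\in\mathcal H$: (i) $\rho(p)_\lambda\rho(q)_\mu h-\rho(q)_\mu\rho(p)_\lambda h-\rho([p_\lambda q]_{\mathcal L})_{\lambda+\mu}h=[\chi_\lambda(p,q)_{\lambda+\mu}h]_{\mathcal H}$; (ii) $\rho(p)_\lambda\chi_\mu(q,r)+\rho(q)_\mu\chi_\lambda(r,p)+\rho(r)_{-\partial-\lambda-\mu}\chi_\lambda(p,q)-\chi_{\lambda+\mu}([q_\mu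 r]_{\mathcal L},p)-\chi_{\lambda+\mu}([r_{-\partial-\lambda}p]_{\mathcal L},q)-\chi_{\lambda+\mu}([p_\lambda q]_{\mathcal L},r)=0$; (iii) $\rho(\mathcal Np)_\lambda\mathcal Q(h)=\mathcal Q(\rho(\mathcal Np)_\lambda h+\rho(p)_\lambda\mathcal Q(h)-\mathcal Q(\rho(p)_\lambda h))+\mathcal Q([\Phi(p)_\lambda h]_{\mathcal H})-[\Phi(p)_\lambda\mathcal Q(h)]_{\mathcal H}$; (iv) $\chi_\lambda(\mathcal Np,\mathcal Nq)-\mathcal Q(\chi_\lambda(\mathcal Np,q)+\chi_\lambda(p,\mathcal Nq)-\mathcal Q\chi_\lambda(p,q))-\Phi([\mathcal N(p)_\lambda q]_{\mathcal L}+[p_\lambda\mathcal N(q)]_{\mathcal L}-\mathcal N[p_\lambda q]_{\mathcal L})+\rho(\mathcal Np)_\lambda\Phi(q)-\rho(\mathcal Nq)_{-\partial-\lambda}\Phi(p)+\mathcal Q(\rho(q)_{-\partial-\lambda}\Phi(p)-\rho(p)_\lambda\Phi(q)+\Phi([p_\lambda q]_{\mathcal L}))+[\Phi(p)_\lambda\Phi(q)]_{\mathcal H}=0$. Such a triple arises from a non-abelian extension $0\to\mathcal H_{\mathcal Q}\to\mathcal E_{\mathcal R}\xrightarrow{proj}\mathcal L_{\mathcal N}\to0$ (a $\mathbb C[\partial]$-split short exact sequence of Nijenhuis Lie conformal algebras) and a $\mathbb C[\partial]$-linear section $s$ of $proj$ via $\chi_\lambda(p,q)=[s(p)_\lambda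 s(q)]_{\mathcal E}-s([p_\lambda q]_{\mathcal L})$, $\rho(p)_\lambda h=[s(p)_\lambda h]_{\mathcal E}$, $\Phi(p)=\mathcal R(s(p))-s(\mathcal N(p))$. *)

(* Defs.v *)
From Stdlib Require Import ClassicalEpsilon.
From mathcomp Require Import all_boot all_order all_algebra.
From mathcomp Require Import complex.
From mathcomp Require Import Rstruct.
Set Implicit Arguments. Unset Strict Implicit. Unset Printing Implicit Defensive.
Import Order.TTheory GRing.Theory Num.Theory.
Local Open Scope ring_scope.

Definition C : fieldType := (Rdefinitions.R)[i].

Section Defs.

(* Polynomials V[lambda] with coefficients in a C-vector space V are   *)
(* represented by their coefficient sequences f : nat -> V             *)
(* (f n = coefficient of lambda^n) with finite support.                *)

Definition local (V : lmodType C) (f : nat -> V) : Prop :=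
  exists N : nat, forall n : nat, (N <= n)%N -> f n = 0.

(* a bound on the support (meaningful when f is local) *)
Definition pdeg (V : lmodType C) (f : nat -> V) : nat :=
  epsilon (inhabits 0%N) (fun N => forall n : nat, (N <= n)%N -> f n = 0).

(* With T = (l *: _) this is
   evaluation at the scalar l; with T = (-d - l) (d the derivation) this is
   the usual substitution lambda := -d - l of conformal algebra theory. *)
Definition pev (V : lmodType C) (f : nat -> V) (T : V -> V) : V :=
  \sum_(i < pdeg f) iter i T (f i).

Definition sc (V : lmodType C) (l : C) : V -> V := fun v => l *: v.
Definition mdsc (V : lmodType C) (d : V -> V) (l : C) : V -> V :=
  fun v => - d v - l *: v.

Definition lb (A B X : lmodType C) (f : nat -> A -> B -> X)
  (a : A) (b : B) (T : X -> X) : X := pev (fun n => f n a b) T.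

Definition lin (A B : lmodType C) (f : A -> B) : Prop :=
  forall (k : C) (u v : A), f (k *: u + v) = k *: f u + f v.
Definition bilin (A B X : lmodType C) (f : A -> B -> X) : Prop :=
  (forall b, lin (fun a => f a b)) /\ (forall a, lin (f a)).

Definition lmap (A B X : lmodType C) (f : nat -> A -> B -> X) : Prop :=
  (forall n, bilin (f n)) /\ (forall a b, local (fun n => f n a b)).

(* Lie conformal algebras.  V is a C[d]-module (C-vector space with the *)
(* C-linear operator d), and [a_lambda b] = sum_n lambda^n br n a b.    *)
(* Polynomial identities in lambda (resp. lambda, mu) are stated for all *)
(* scalar values of lambda (resp. lambda, mu), which over the infinite  *)
(* field C is the same as equality of polynomials.                     *)
Definition is_LCA (V : lmodType C) (d : V -> V) (br : nat -> V -> V -> V) :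
    Prop :=
  lin d /\ lmap br /\
      (forall a b (l : C), lb br (d a) b (sc l) = - (l *: lb br a b (sc l))) /\
      (forall a b (l : C),
          lb br a (d b) (sc l) = d (lb br a b (sc l)) + l *: lb br a b (sc l)) /\
      (forall a b (l : C), lb br a b (sc l) = - lb br b a (mdsc d l)) /\
      (forall a b c (l m : C),
          lb br a (lb br b c (sc m)) (sc l) =
          lb br (lb br a b (sc l)) c (sc (l + m)) +
          lb br b (lb br a c (sc l)) (sc m)).

Definition is_nijenhuis (V : lmodType C) (d : V -> V)
    (br : nat -> V -> V -> V) (N : V -> V) : Prop :=
  [/\ lin N, (forall v, N (d v) = d (N v)) &
      (forall p q (l : C),
          lb br (N p) (N q) (sc l) =
          N (lb br (N p) q (sc l) + lb br p (N q) (sc l)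
             - N (lb br p q (sc l))))].

Record NLCA (V : lmodType C) : Type := MkNLCA {
  dd : V -> V;
  br : nat -> V -> V -> V;
  nij : V -> V;
  NLCA_LCA : is_LCA dd br;
  NLCA_nij : is_nijenhuis dd br nij
}.

Definition is_aut (V : lmodType C) (A : NLCA V) (f : V -> V) : Prop :=
  [/\ bijective f, lin f, (forall v, f (dd A v) = dd A (f v)),
      (forall a b (l : C), f (lb (br A) a b (sc l)) =
                           lb (br A) (f a) (f b) (sc l)) &
      (forall v, f (nij A v) = nij A (f v))].

Definition is_na_cocycle (L H : lmodType C) (AL : NLCA L) (AH : NLCA H)
    (chi : nat -> L -> L -> H) (rho : nat -> L -> H -> H) (Phi : L -> H) :
    Prop :=
  let dL := dd AL in let bL := br AL in let N := nij AL in
  let dH := dd AH in let bH := br AH in let Q := nij AH in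
  lmap chi /\ lmap rho /\ lin Phi /\
  (forall p q (h : H) (l m : C),
     lb rho p (lb rho q h (sc m)) (sc l) - lb rho q (lb rho p h (sc l)) (sc m)
     - lb rho (lb bL p q (sc l)) h (sc (l + m))
     = lb bH (lb chi p q (sc l)) h (sc (l + m))) /\
  (forall p q r (l m : C),
     lb rho p (lb chi q r (sc m)) (sc l)
     + lb rho q (lb chi r p (sc l)) (sc m)
     + lb rho r (lb chi p q (sc l)) (mdsc dH (l + m))
     - lb chi (lb bL q r (sc m)) p (sc (l + m))
     - lb chi (lb bL r p (mdsc dL l)) q (sc (l + m))
     - lb chi (lb bL p q (sc l)) r (sc (l + m)) = 0) /\
  (forall p (h : H) (l : C),
     lb rho (N p) (Q h) (sc l) =
     Q (lb rho (N p) h (sc l) + lb rho p (Q h) (sc l)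
        - Q (lb rho p h (sc l)))
     + Q (lb bH (Phi p) h (sc l)) - lb bH (Phi p) (Q h) (sc l)) /\
  (forall p q (l : C),
     lb chi (N p) (N q) (sc l)
     - Q (lb chi (N p) q (sc l) + lb chi p (N q) (sc l)
          - Q (lb chi p q (sc l)))
     - Phi (lb bL (N p) q (sc l) + lb bL p (N q) (sc l)
            - N (lb bL p q (sc l)))
     + lb rho (N p) (Phi q) (sc l)
     - lb rho (N q) (Phi p) (mdsc dH l)
     + Q (lb rho q (Phi p) (mdsc dH l) - lb rho p (Phi q) (sc l)
          + Phi (lb bL p q (sc l)))
     + lb bH (Phi p) (Phi q) (sc l) = 0).

Definition chi_ab (L H : lmodType C) (alpha : H -> H) (bi : L -> L)
    (chi : nat -> L -> L -> H) : nat -> L -> L -> H :=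
  fun n p q => alpha (chi n (bi p) (bi q)).
Definition rho_ab (L H : lmodType C) (alpha ai : H -> H) (bi : L -> L)
    (rho : nat -> L -> H -> H) : nat -> L -> H -> H :=
  fun n p h => alpha (rho n (bi p) (ai h)).
Definition Phi_ab (L H : lmodType C) (alpha : H -> H) (bi : L -> L)
    (Phi : L -> H) : L -> H :=
  fun p => alpha (Phi (bi p)).

End Defs.

(* Main.v *)
Require Import Defs.
From Stdlib Require Import ClassicalEpsilon.
From mathcomp Require Import all_boot all_order all_algebra.
Set Implicit Arguments. Unset Strict Implicit. Unset Printing Implicit Defensive.
Import GRing.Theory.
Local Open Scope ring_scope.

Section Lin.
Variables (A B : lmodType C) (f : A -> B) (hf : lin f).
Lemma lin0 : f 0 = 0.
Proof. have h := hf 1 0 0; rewrite !scale1r addr0 in h.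
have : f 0 + f 0 - f 0 = f 0 - f 0 by rewrite -h.
by rewrite addrK subrr. Qed.
Lemma linD x y : f (x + y) = f x + f y.
Proof. by have := hf 1 x y; rewrite !scale1r. Qed.
Lemma linN x : f (- x) = - f x.
Proof. by have := hf (-1) x 0; rewrite addr0 lin0 addr0 !scaleN1r. Qed.
Lemma linZ k x : f (k *: x) = k *: f x.
Proof. by have := hf k x 0; rewrite addr0 lin0 addr0. Qed.
Lemma lin_sum n (g : nat -> A) : f (\sum_(i < n) g i) = \sum_(i < n) f (g i).
Proof. elim: n => [|n IH]; first by rewrite !big_ord0 lin0.
by rewrite !big_ord_recr /= linD IH. Qed.
End Lin.

Lemma iter0 (V : lmodType C) (T : V -> V) i : T 0 = 0 -> iter i T 0 = 0.
Proof. by move=> h; elim: i => //= i ->. Qed.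

Lemma sum_bound (V : lmodType C) (g : nat -> V) (T : V -> V) N M :
  T 0 = 0 -> (forall n, (N <= n)%N -> g n = 0) -> (N <= M)%N ->
  \sum_(i < M) iter i T (g i) = \sum_(i < N) iter i T (g i).
Proof.
move=> T0 hg; elim: M => [|M IH]; first by rewrite leqn0 => /eqP ->.
rewrite leq_eqVlt => /orP [/eqP <- //|]; rewrite ltnS => hNM.
by rewrite big_ord_recr /= hg // iter0 // addr0 IH.
Qed.

Lemma pev_bound (V : lmodType C) (g : nat -> V) (T : V -> V) N :
  T 0 = 0 -> (forall n, (N <= n)%N -> g n = 0) ->
  pev g T = \sum_(i < N) iter i T (g i).
Proof.
move=> T0 hN; rewrite /pev.
have hP : forall n, (pdeg g <= n)%N -> g n = 0.
  rewrite /pdeg; apply: (epsilon_spec (inhabits 0%N) (fun N => forall n : nat, (N <= n)%N -> g n = 0)).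
  by exists N.
rewrite -(@sum_bound _ g T (pdeg g) (maxn N (pdeg g))) ?leq_maxr //.
by rewrite (@sum_bound _ g T N (maxn N (pdeg g))) ?leq_maxl.
Qed.

Lemma pev_comm (V W : lmodType C) (f : V -> W) (g : nat -> V) T T' :
  lin f -> local g -> T 0 = 0 -> T' 0 = 0 -> (forall v, f (T v) = T' (f v)) ->
  f (pev g T) = pev (fun n => f (g n)) T'.
Proof.
move=> hf [N hN] T0 T'0 hc.
rewrite (pev_bound T0 hN) (@pev_bound _ _ _ N T'0); last by move=> n /hN ->; rewrite lin0.
rewrite (lin_sum hf N (fun i => iter i T (g i))); apply: eq_bigr => i _.
move: (g i); elim: (nat_of_ord i) => //= k IH v; by rewrite hc IH.
Qed.

Theorem lemma6p2 (L H : lmodType C) (AL : NLCA L) (AH : NLCA H)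
    (chi : nat -> L -> L -> H) (rho : nat -> L -> H -> H) (Phi : L -> H)
    (alpha alpha_inv : H -> H) (beta beta_inv : L -> L) :
  is_na_cocycle AL AH chi rho Phi ->
  is_aut AH alpha -> cancel alpha alpha_inv -> cancel alpha_inv alpha ->
  is_aut AL beta -> cancel beta beta_inv -> cancel beta_inv beta ->
  is_na_cocycle AL AH (chi_ab alpha beta_inv chi)
    (rho_ab alpha alpha_inv beta_inv rho) (Phi_ab alpha beta_inv Phi).
Proof.
move=> /= [lmchi [lmrho [linPhi [Hi [Hii [Hiii Hiv]]]]]].
move=> [_ alin adH abr aQ] aK aiK [_ blin bdL bbr bN] bK biK.
have [dLlin [lmbL [_ [_ [skewL _]]]]] := NLCA_LCA AL.
have [dHlin _] := NLCA_LCA AH.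
have ailin : lin alpha_inv.
  move=> k u v; apply: (can_inj aK); rewrite aiK alin !aiK //.
have Blin : lin beta_inv.
  move=> k u v; apply: (can_inj bK); rewrite biK blin !biK //.
have aiQ x : alpha_inv (nij AH x) = nij AH (alpha_inv x).
  by apply: (can_inj aK); rewrite aiK aQ aiK.
have BN x : beta_inv (nij AL x) = nij AL (beta_inv x).
  by apply: (can_inj bK); rewrite biK bN biK.
have Bbr x y l : beta_inv (lb (br AL) x y (sc l)) = lb (br AL) (beta_inv x) (beta_inv y) (sc l).
  by apply: (can_inj bK); rewrite biK bbr !biK.
have Bbrm x y l : beta_inv (lb (br AL) x y (mdsc (dd AL) l)) = lb (br AL) (beta_inv x) (beta_inv y) (mdsc (dd AL) l).
  have sk u v : lb (br AL) u v (mdsc (dd AL) l) = - lb (br AL) v u (sc l).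
    by rewrite skewL opprK.
  by rewrite !sk (linN Blin) Bbr.
have sc0 (V : lmodType C) l : sc l (0 : V) = 0 by rewrite /sc scaler0.
have md0 l : mdsc (dd AH) l 0 = 0 by rewrite /mdsc (lin0 dHlin) scaler0 subr0 oppr0.
have asc l v : alpha (sc l v) = sc l (alpha v) by rewrite /sc (linZ alin).
have amd l v : alpha (mdsc (dd AH) l v) = mdsc (dd AH) l (alpha v).
  by rewrite /mdsc (linD alin) !(linN alin) (linZ alin) adH.
have Rchi x y l : lb (chi_ab alpha beta_inv chi) x y (sc l) = alpha (lb chi (beta_inv x) (beta_inv y) (sc l)).
  by rewrite /lb (pev_comm alin (lmchi.2 _ _) (sc0 _ l) (sc0 _ l) (asc l)).
have Rrho x y l : lb (rho_ab alpha alpha_inv beta_inv rho) x y (sc l) = alpha (lb rho (beta_inv x) (alpha_inv y) (sc l)).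
  by rewrite /lb (pev_comm alin (lmrho.2 _ _) (sc0 _ l) (sc0 _ l) (asc l)).
have Rrhom x y l : lb (rho_ab alpha alpha_inv beta_inv rho) x y (mdsc (dd AH) l) = alpha (lb rho (beta_inv x) (alpha_inv y) (mdsc (dd AH) l)).
  by rewrite /lb (pev_comm alin (lmrho.2 _ _) (md0 l) (md0 l) (amd l)).
have abH x y l : alpha (lb (br AH) x y (sc l)) = lb (br AH) (alpha x) (alpha y) (sc l) by apply: abr.
have aD := linD alin; have aN := linN alin; have a0 := lin0 alin.
have BD := linD Blin; have BNN := linN Blin.
rewrite /Phi_ab.
split; last split; last split; last split; last split; last split.
- split=> [n|x y].
    split=> [y|x] k u v /=; rewrite /chi_ab.
      by rewrite Blin; have := (lmchi.1 n).1 (beta_inv y) k (beta_inv u) (beta_inv v) => /= ->; rewrite alin.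
    by rewrite Blin; have := (lmchi.1 n).2 (beta_inv x) k (beta_inv u) (beta_inv v) => /= ->; rewrite alin.
  have [M hM] := lmchi.2 (beta_inv x) (beta_inv y).
  by exists M => n /hM; rewrite /chi_ab => ->.
- split=> [n|x y].
    split=> [y|x] k u v /=; rewrite /rho_ab.
      by rewrite Blin; have := (lmrho.1 n).1 (alpha_inv y) k (beta_inv u) (beta_inv v) => /= ->; rewrite alin.
    by rewrite ailin; have := (lmrho.1 n).2 (beta_inv x) k (alpha_inv u) (alpha_inv v) => /= ->; rewrite alin.
  have [M hM] := lmrho.2 (beta_inv x) (alpha_inv y).
  by exists M => n /hM; rewrite /rho_ab => ->.
- by move=> k u v; rewrite Blin linPhi alin.
- move=> p q h l m.
  rewrite !Rrho !Rchi !aK !Bbr.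
  have E := congr1 alpha (Hi (beta_inv p) (beta_inv q) (alpha_inv h) l m).
  rewrite !aD !aN abH aiK in E.
  rewrite E //.
- move=> p q r l m.
  rewrite !Rrho !Rrhom !Rchi !aK !Bbr !Bbrm.
  have E := congr1 alpha (Hii (beta_inv p) (beta_inv q) (beta_inv r) l m).
  rewrite !aD !aN a0 in E.
  exact E.
- move=> p h l.
  rewrite !Rrho !aiQ ?aK !BN.
  have E := congr1 alpha (Hiii (beta_inv p) (alpha_inv h) l).
  do 4 rewrite ?aD ?aN ?aQ ?abH ?aiK in E.
  exact E.
- move=> p q l.
  rewrite !Rrho !Rrhom !Rchi !aK.
  do 4 rewrite ?BD ?BNN ?BN ?Bbr.
  have E := congr1 alpha (Hiv (beta_inv p) (beta_inv q) l).
  do 4 rewrite ?aD ?aN ?aQ ?abH ?a0 in E.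
  exact E.
Qed.
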